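(* Let $l,n$ be positive integers, $\mathbf{x}_1,\dots,\mathbf{x}_l\in\mathbb{R}^n$, $y_1,\dots,y_l\in\mathbb{R}$, $a_1,\dots,a_l,b_1,\dots,b_l\in\mathbb{R}$. Let $\varphi:\mathbb{R}\to[0,\infty)$ be nonconstant, continuous and sublinear, with $\varphi^*=\iota_{[\alpha,\beta]}$, $\alpha<\beta$. For $C>0$ let $\mathbf w^*(C)$ be the optimal solution of $$\min_{\mathbf w\in\mathbb{R}^n}\tfrac12\|\mathbf w\|^2+C\sum_{i=1}^l\varphi\big(\mathbf w^T(a_i\mathbf x_i)+b_iy_i\big),$$ and let $\theta^*(C)$ be an optimal solution of the dual problem $\min_{\theta\in[\alpha,\beta]^l}\frac{C}{2}\|\mathbf Z^T\theta\|^2-\langle\bar{\mathbf y},\theta\rangle$, where $\mathbf Z\in\mathbb{R}^{l\times n}$ has $i$-th row $a_i\mathbf x_i^T$ and $\bar{\mathbf y}=(b_1y_1,\dots,b_ly_l)^T$. Let $0<C_1<\dots<C_{\mathcal K}$ and suppose $\mathbf w^*(C_k)$ is known for some integer $1\le k<\mathcal K$. If $$-\tfrac{C_k+C_{k+1}}{2C_k}\langle\mathbf w^*(C_k),a_i\mathbf x_i\rangle-\tfrac{C_{k+1}-C_k}{2C_k}\|\mathbf w^*(C_k)\|\,\|a_i\mathbf x_i\|>b_iy_i,$$ then $[\theta^*(C_{k+1})]_i=\alpha$, i.e., $i\in\mathcal R$ (at $C=C_{k+1}$). Similarly, if $$-\tfrac{C_k+C_{k+1}}{2C_k}\langle\mathbf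 w^*(C_k),a_i\mathbf x_i\rangle+\tfrac{C_{k+1}-C_k}{2C_k}\|\mathbf w^*(C_k)\|\,\|a_i\mathbf x_i\|<b_iy_i,$$ then $[\theta^*(C_{k+1})]_i=\beta$, i.e., $i\in\mathcal L$.
   Context: Sublinear means convex and $\varphi(tx)=t\varphi(x)$ for $t>0$; $\varphi^*(s)=\sup_t(st-\varphi(t))$; $\iota_{[\alpha,\beta]}$ is $0$ on $[\alpha,\beta]$ and $+\infty$ elsewhere. Primal and dual solutions satisfy $\mathbf w^*(C)=-C\mathbf Z^T\theta^*(C)$. At parameter $C$: $\mathcal R=\{i:-\langle\mathbf w^*(C),a_i\mathbf x_i\rangle>b_iy_i\}$, $\mathcal L=\{i:-\langle\mathbf w^*(C),a_i\mathbf x_i\rangle<b_iy_i\}$. *)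

(* Defs.v *)
From HB Require Import structures.
From mathcomp Require Import all_boot all_order all_algebra.
From mathcomp Require Import all_classical all_reals all_analysis.
Set Implicit Arguments. Unset Strict Implicit. Unset Printing Implicit Defensive.
Import Order.TTheory GRing.Theory Num.Theory.
Import numFieldNormedType.Exports.
Local Open Scope classical_set_scope.
Local Open Scope ring_scope.

Section Defs.
Variable R : realType.

Definition dotv (n : nat) (u v : 'cV[R]_n) : R := (u^T *m v) 0 0.
Definition normv (n : nat) (u : 'cV[R]_n) : R := Num.sqrt (dotv u u).

Definition fconj (phi : R -> R) (s : R) : \bar R :=
  ereal_sup [set ((s * t - phi t)%:E) | t in [set: R]].

Definition iota_itv (alpha beta : R) (s : R) : \bar R :=
  if (alpha <= s) && (s <= beta) then 0%E else +oo%E.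

Definition sublinear (phi : R -> R) : Prop :=
  (forall (x y lam : R), 0 <= lam -> lam <= 1 ->
     phi (lam * x + (1 - lam) * y) <= lam * phi x + (1 - lam) * phi y) /\
  (forall (t x : R), 0 < t -> phi (t * x) = t * phi x).

Definition Zmat (l n : nat) (a : 'I_l -> R) (x : 'I_l -> 'cV[R]_n) : 'M[R]_(l, n) :=
  \matrix_(i < l, j < n) (a i * x i j 0).
Definition ybar (l : nat) (b y : 'I_l -> R) : 'cV[R]_l :=
  \col_(i < l) (b i * y i).

Definition primal_obj (l n : nat) (phi : R -> R) (a b y : 'I_l -> R)
  (x : 'I_l -> 'cV[R]_n) (C : R) (w : 'cV[R]_n) : R :=
  2^-1 * (normv w) ^+ 2 +
  C * \sum_(i < l) phi (dotv w (a i *: x i) + b i * y i).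

Definition primal_opt (l n : nat) (phi : R -> R) (a b y : 'I_l -> R)
  (x : 'I_l -> 'cV[R]_n) (C : R) (w : 'cV[R]_n) : Prop :=
  forall v : 'cV[R]_n, primal_obj phi a b y x C w <= primal_obj phi a b y x C v.

Definition dual_obj (l n : nat) (a b y : 'I_l -> R) (x : 'I_l -> 'cV[R]_n)
  (C : R) (theta : 'cV[R]_l) : R :=
  C / 2 * (normv ((Zmat a x)^T *m theta)) ^+ 2 - dotv (ybar b y) theta.

Definition dual_feas (l : nat) (alpha beta : R) (theta : 'cV[R]_l) : Prop :=
  forall i : 'I_l, alpha <= theta i 0 <= beta.

Definition dual_opt (l n : nat) (alpha beta : R) (a b y : 'I_l -> R)
  (x : 'I_l -> 'cV[R]_n) (C : R) (theta : 'cV[R]_l) : Prop :=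
  dual_feas alpha beta theta /\
  forall th : 'cV[R]_l, dual_feas alpha beta th ->
    dual_obj a b y x C theta <= dual_obj a b y x C th.

Definition in_calR (l n : nat) (a b y : 'I_l -> R) (x : 'I_l -> 'cV[R]_n)
  (w : 'cV[R]_n) (i : 'I_l) : Prop := - dotv w (a i *: x i) > b i * y i.
Definition in_calL (l n : nat) (a b y : 'I_l -> R) (x : 'I_l -> 'cV[R]_n)
  (w : 'cV[R]_n) (i : 'I_l) : Prop := - dotv w (a i *: x i) < b i * y i.
End Defs.

(* Main.v *)
Require Import Defs.
From HB Require Import structures.
From mathcomp Require Import all_boot all_order all_algebra.
From mathcomp Require Import all_classical all_reals all_analysis.
From mathcomp Require Import ring lra.
Import Order.TTheory GRing.Theory Num.Theory.
Import numFieldNormedType.Exports.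
Local Open Scope ring_scope.

Lemma dotvE {R : realType} {n} (u v : 'cV[R]_n) : dotv u v = \sum_j u j 0 * v j 0.
Proof. by rewrite /dotv mxE; apply: eq_bigr => j _; rewrite mxE. Qed.

Lemma dotvC {R : realType} {n} (u v : 'cV[R]_n) : dotv u v = dotv v u.
Proof. by rewrite !dotvE; apply: eq_bigr => j _; rewrite mulrC. Qed.

Lemma dotvDl {R : realType} {n} (u v w : 'cV[R]_n) : dotv (u + v) w = dotv u w + dotv v w.
Proof. by rewrite !dotvE -big_split; apply: eq_bigr => j _; rewrite !mxE mulrDl. Qed.

Lemma dotvZl {R : realType} {n} (c : R) (u w : 'cV[R]_n) : dotv (c *: u) w = c * dotv u w.
Proof. by rewrite !dotvE mulr_sumr; apply: eq_bigr => j _; rewrite !mxE mulrA. Qed.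

Lemma dotvNl {R : realType} {n} (u w : 'cV[R]_n) : dotv (- u) w = - dotv u w.
Proof. by rewrite -scaleN1r dotvZl mulN1r. Qed.

Lemma dotvBl {R : realType} {n} (u v w : 'cV[R]_n) : dotv (u - v) w = dotv u w - dotv v w.
Proof. by rewrite dotvDl dotvNl. Qed.

Lemma dotvDr {R : realType} {n} (u v w : 'cV[R]_n) : dotv w (u + v) = dotv w u + dotv w v.
Proof. by rewrite dotvC dotvDl; congr (_ + _); apply: dotvC. Qed.
Lemma dotvZr {R : realType} {n} (c : R) (u w : 'cV[R]_n) : dotv w (c *: u) = c * dotv w u.
Proof. by rewrite dotvC dotvZl dotvC. Qed.
Lemma dotvNr {R : realType} {n} (u w : 'cV[R]_n) : dotv w (- u) = - dotv w u.
Proof. by rewrite dotvC dotvNl dotvC. Qed.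
Lemma dotvBr {R : realType} {n} (u v w : 'cV[R]_n) : dotv w (u - v) = dotv w u - dotv w v.
Proof. by rewrite dotvDr dotvNr. Qed.

Lemma dotv_ge0 {R : realType} {n} (u : 'cV[R]_n) : 0 <= dotv u u.
Proof. by rewrite dotvE; apply: sumr_ge0 => j _; rewrite -expr2 sqr_ge0. Qed.

Lemma normv_ge0 {R : realType} {n} (u : 'cV[R]_n) : 0 <= normv u.
Proof. exact: sqrtr_ge0. Qed.

Lemma normv_sq {R : realType} {n} (u : 'cV[R]_n) : normv u ^+ 2 = dotv u u.
Proof. by rewrite /normv sqr_sqrtr // dotv_ge0. Qed.

Lemma normvN {R : realType} {n} (u : 'cV[R]_n) : normv (- u) = normv u.
Proof. by rewrite /normv dotvNl dotvNr opprK. Qed.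

Lemma dotv0_eq0 {R : realType} {n} (u : 'cV[R]_n) : dotv u u = 0 -> u = 0.
Proof.
rewrite dotvE => /eqP; rewrite psumr_eq0 => [/allP H|j _]; last by rewrite -expr2 sqr_ge0.
apply/matrixP => j k; rewrite ord1 mxE.
have := H j (mem_index_enum j); rewrite -expr2 sqrf_eq0 /= => /eqP //.
Qed.

Lemma CS {R : realType} {n} (u v : 'cV[R]_n) : dotv u v <= normv u * normv v.
Proof.
have Q : forall s t : R, 0 <= s^+2 * normv u ^+2 - 2 * s * t * dotv u v + t^+2 * normv v ^+2.
  move=> s t; have := dotv_ge0 (s *: u - t *: v).
  rewrite !dotvBl !dotvBr !dotvZl !dotvZr !normv_sq (dotvC v u).
  by move=> H; apply: le_trans H _; rewrite le_eqVlt; apply/orP; left; apply/eqP; ring.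
have hA := normv_ge0 u; have hB := normv_ge0 v.
set A := normv u in Q hA *; set B := normv v in Q hB *; set c := dotv u v in Q *.
have [AB0|ABpos] := eqVneq (A * B) 0.
  have hc : c = 0.
    move/eqP: AB0; rewrite mulf_eq0 => /orP[] /eqP A0.
      have : dotv u u = 0 by rewrite -normv_sq -/A A0 expr0n.
      by move/dotv0_eq0; rewrite /c => ->; rewrite dotvE big1 // => j _; rewrite mxE mul0r.
    have : dotv v v = 0 by rewrite -normv_sq -/B A0 expr0n.
    by move/dotv0_eq0; rewrite /c => ->; rewrite dotvE big1 // => j _; rewrite mxE mulr0.
  by rewrite hc mulr_ge0.
have H := Q B A.
have : 0 < A * B by rewrite lt_def ABpos mulr_ge0.
nra.
Qed.
Lemma conj_lb {R : realType} (phi : R -> R) s t : fconj phi s = 0%E -> s * t - phi t <= 0.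
Proof.
move=> h; rewrite -lee_fin; apply: (@le_trans _ _ (fconj phi s)); [apply: ereal_sup_ubound; by exists t | by rewrite h].
Qed.

Lemma conj_ub {R : realType} (phi : R -> R) s : (forall t, s * t - phi t <= 0) -> (fconj phi s <= 0)%E.
Proof. by move=> h; apply: ge_ereal_sup => _ [t _ <-]; rewrite lee_fin. Qed.

Lemma phi_props {R : realType} (phi : R -> R) (alpha beta : R)
  (phi_subl : sublinear phi)
  (phi_conj : forall s, fconj phi s = iota_itv alpha beta s)
  (hab : alpha < beta) :
  [/\ (forall s t, alpha <= s -> s <= beta -> s * t <= phi t),
      phi 0 = 0,
      (forall t, 0 <= t -> phi t <= beta * t) &
      (forall t, t <= 0 -> phi t <= alpha * t)].
Proof.
case: phi_subl => _ hom.
have lb : forall s t, alpha <= s -> s <= beta -> s * t <= phi t.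
  move=> s t h1 h2; rewrite -subr_le0; apply: conj_lb.
  by rewrite phi_conj /iota_itv h1 h2.
have p0 : phi 0 = 0.
  have := hom 2 0 (ltr0n _ 2); rewrite mulr0 => h.
  lra.
have hp : forall t, 0 < t -> phi t = t * phi 1 by move=> t ht; rewrite -hom // mulr1.
have hn : forall t, t < 0 -> phi t = - t * phi (-1).
  by move=> t ht; rewrite -hom ?oppr_gt0 // mulrN1 opprK.
have la := lb alpha (-1) (lexx _) (ltW hab).
have lbb := lb beta 1 (ltW hab) (lexx _).
have p1 : phi 1 <= beta.
  rewrite leNgt; apply/negP => hlt.
  pose s := (beta + phi 1) / 2.
  have : (fconj phi s <= 0)%E.
    apply: conj_ub => t.
    have [t0|t0|->] := ltgtP t 0.
    - rewrite hn //; rewrite /s; nra.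
    - rewrite hp //; rewrite /s; nra.
    - by rewrite p0 mulr0 subrr.
  rewrite phi_conj /iota_itv.
  have -> : (s <= beta) = false by apply/negbTE; rewrite -ltNge /s; lra.
  by rewrite andbF.
have pm1 : phi (-1) <= - alpha.
  rewrite leNgt; apply/negP => hlt.
  pose s := (alpha - phi (-1)) / 2.
  have : (fconj phi s <= 0)%E.
    apply: conj_ub => t.
    have [t0|t0|->] := ltgtP t 0.
    - rewrite hn //; rewrite /s; nra.
    - rewrite hp //; rewrite /s; nra.
    - by rewrite p0 mulr0 subrr.
  rewrite phi_conj /iota_itv.
  have -> : (alpha <= s) = false by apply/negbTE; rewrite -ltNge /s; lra.
  by [].
split => //.
- move=> t; rewrite le_eqVlt => /orP[/eqP <-|t0]; first by rewrite p0 mulr0.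
  by rewrite hp //; nra.
- move=> t; rewrite le_eqVlt => /orP[/eqP ->|t0]; first by rewrite p0 mulr0.
  by rewrite hn //; nra.
Qed.

Lemma lim0 {R : realType} (A B d : R) : 0 < d -> 0 <= B ->
  (forall e, 0 < e -> e <= d -> 0 <= e * A + e ^+ 2 * B) -> 0 <= A.
Proof.
move=> hd hB h; rewrite leNgt; apply/negP => hA.
have hD : 0 < d * B - A by nra.
pose e := d * (- A) / (d * B - A).
have he : e * (d * B - A) = d * (- A) by rewrite /e mulfVK // gt_eqF.
have e0 : 0 < e by rewrite /e divr_gt0 // mulr_gt0 // oppr_gt0.
have ed : e <= d.
  rewrite /e ler_pdivrMr //; nra.
have := h e e0 ed.
have h2 : (A + e * B) * (d * B - A) = - A ^+ 2.
  have -> : (A + e * B) * (d * B - A) = A * (d * B - A) + B * (e * (d * B - A)) by ring.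
  rewrite he; ring.
have h3 : A + e * B < 0.
  rewrite ltNge; apply/negP => h4.
  have : 0 <= (A + e * B) * (d * B - A) by rewrite mulr_ge0 // ltW.
  rewrite h2; nra.
nra.
Qed.

Definition Fs {R : realType} {l n : nat} (phi : R -> R) (a b y : 'I_l -> R)
  (x : 'I_l -> 'cV[R]_n) (w : 'cV[R]_n) : R :=
  \sum_(i < l) phi (dotv w (a i *: x i) + b i * y i).

Lemma VI_opt {R : realType} {l n : nat} (phi : R -> R) (a b y : 'I_l -> R)
  (x : 'I_l -> 'cV[R]_n) (C : R) (w : 'cV[R]_n) :
  sublinear phi -> 0 < C -> primal_opt phi a b y x C w ->
  forall v, 0 <= dotv w (v - w) + C * (Fs phi a b y x v - Fs phi a b y x w).
Proof.
move=> [cvx _] hC hopt v.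
set d := v - w.
have hv : v = w + d by rewrite /d addrC subrK.
clearbody d.
apply: (@lim0 _ _ (dotv d d / 2) 1) => //; first by rewrite divr_ge0 // dotv_ge0.
move=> e e0 e1.
have := hopt (w + e *: d); rewrite /primal_obj !normv_sq.
have hF : Fs phi a b y x (w + e *: d) <= e * Fs phi a b y x v + (1 - e) * Fs phi a b y x w.
  rewrite /Fs !mulr_sumr -big_split /=; apply: ler_sum => i _.
  have -> : dotv (w + e *: d) (a i *: x i) + b i * y i =
     e * (dotv v (a i *: x i) + b i * y i) + (1 - e) * (dotv w (a i *: x i) + b i * y i).
    rewrite hv !dotvDl dotvZl; ring.
  by apply: cvx => //; apply: ltW.
have hCF := ler_wpM2l (ltW hC) hF.
rewrite -/(Fs phi a b y x w) -/(Fs phi a b y x (w + e *: d)).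
have E : dotv (w + e *: d) (w + e *: d) = dotv w w + 2 * e * dotv w d + e^+2 * dotv d d.
  by rewrite dotvDl !dotvDr !dotvZl !dotvZr (dotvC d w); ring.
rewrite E.
move=> hle; nra.
Qed.

Lemma Zdelta {R : realType} {l n : nat} (a : 'I_l -> R) (x : 'I_l -> 'cV[R]_n) i :
  (Zmat a x)^T *m delta_mx i 0 = a i *: x i.
Proof.
apply/matrixP => j k; rewrite ord1 !mxE (bigD1 i) //= big1 => [|m hm].
  by rewrite !mxE !eqxx mulr1 addr0.
by rewrite !mxE (negbTE hm) mulr0.
Qed.

Lemma dotv_delta {R : realType} {l : nat} (u : 'cV[R]_l) i : dotv u (delta_mx i 0) = u i 0.
Proof.
rewrite dotvE (bigD1 i) //= big1 => [|m hm]; first by rewrite !mxE !eqxx mulr1 addr0.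
by rewrite !mxE (negbTE hm) mulr0.
Qed.

Lemma dual_diff {R : realType} {l n : nat} (a b y : 'I_l -> R) (x : 'I_l -> 'cV[R]_n)
  (C : R) (th : 'cV[R]_l) i s :
  dual_obj a b y x C (th + s *: delta_mx i 0) - dual_obj a b y x C th =
  - s * (dotv (- C *: ((Zmat a x)^T *m th)) (a i *: x i) + b i * y i)
  + s ^+ 2 * (C / 2 * dotv (a i *: x i) (a i *: x i)).
Proof.
rewrite /dual_obj !normv_sq mulmxDr -scalemxAr Zdelta.
rewrite dotvDr dotvZr dotv_delta.
have -> : ybar b y i 0 = b i * y i by rewrite mxE.
rewrite !dotvDl !dotvDr !dotvZl !dotvZr (dotvC (x i)).
move: (dotv _ (x i)) (dotv _ th) (dotv (x i) (x i)) (dotv (_^T *m th) _) => P Q S T.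
by field; rewrite ?pnatr_eq0.
Qed.

Lemma dual_KKT {R : realType} {l n : nat} (alpha beta : R) (a b y : 'I_l -> R)
  (x : 'I_l -> 'cV[R]_n) (C : R) (th : 'cV[R]_l) :
  0 < C -> dual_opt alpha beta a b y x C th ->
  forall i, let t := dotv (- C *: ((Zmat a x)^T *m th)) (a i *: x i) + b i * y i in
   (alpha < th i 0 -> 0 <= t) /\ (th i 0 < beta -> t <= 0).
Proof.
move=> hC [feas hopt] i t.
have hB : 0 <= C / 2 * dotv (a i *: x i) (a i *: x i).
  by rewrite mulr_ge0 ?divr_ge0 ?dotv_ge0 // ltW.
have feasS : forall s, alpha <= th i 0 + s <= beta ->
    dual_feas alpha beta (th + s *: delta_mx i 0).
  move=> s hs j; rewrite !mxE; case: (boolP (j == i)) => [/eqP ->|hji] /=.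
  - by rewrite mulr1.
  - rewrite mulr0 addr0; apply: feas.
have [fa fb] := andP (feas i).
set B := C / 2 * dotv (a i *: x i) (a i *: x i) in hB.
split => h.
- apply: (@lim0 _ t B (th i 0 - alpha)) => //; first by rewrite subr_gt0.
  move=> e e0 e1.
  have hf : alpha <= th i 0 + - e <= beta by apply/andP; split; lra.
  have := hopt _ (feasS (- e) hf).
  rewrite -subr_ge0 dual_diff -/t -/B opprK sqrrN; apply.
- rewrite -oppr_ge0.
  apply: (@lim0 _ (- t) B (beta - th i 0)) => //; first by rewrite subr_gt0.
  move=> e e0 e1.
  have hf : alpha <= th i 0 + e <= beta by apply/andP; split; lra.
  have := hopt _ (feasS e hf).
  rewrite -subr_ge0 dual_diff -/t -/B mulNr -mulrN; apply.
Qed.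

Lemma sum_theta {R : realType} {l n : nat} (a : 'I_l -> R) (x : 'I_l -> 'cV[R]_n)
  (th : 'cV[R]_l) (d : 'cV[R]_n) :
  \sum_j th j 0 * dotv d (a j *: x j) = dotv d ((Zmat a x)^T *m th).
Proof.
rewrite dotvE.
under eq_bigr => j _ do rewrite dotvE mulr_sumr.
rewrite exchange_big /=; apply: eq_bigr => k _.
rewrite !mxE mulr_sumr; apply: eq_bigr => j _; rewrite !mxE; ring.
Qed.

Lemma VI_dual {R : realType} {l n : nat} (phi : R -> R) (alpha beta : R)
  (a b y : 'I_l -> R) (x : 'I_l -> 'cV[R]_n) (C : R) (th : 'cV[R]_l)
  (phi_subl : sublinear phi)
  (phi_conj : forall s, fconj phi s = iota_itv alpha beta s)
  (hab : alpha < beta) :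
  0 < C -> dual_opt alpha beta a b y x C th ->
  let u := - C *: ((Zmat a x)^T *m th) in
  forall v, 0 <= dotv u (v - u) + C * (Fs phi a b y x v - Fs phi a b y x u).
Proof.
move=> hC hopt u v.
have [lb p0 pp pn] := phi_props _ _ _ phi_subl phi_conj hab.
have KKT := dual_KKT _ _ _ _ _ _ _ _ hC hopt.
have feas := hopt.1.
have hF : dotv (v - u) ((Zmat a x)^T *m th) <= Fs phi a b y x v - Fs phi a b y x u.
  rewrite -sum_theta /Fs -sumrB; apply: ler_sum => j _.
  have [fa fb] := andP (feas j).
  have [K1 K2] := KKT j.
  rewrite -/u in K1 K2.
  set T := dotv u (a j *: x j) + b j * y j in K1 K2 *.
  have h1 := lb (th j 0) (dotv v (a j *: x j) + b j * y j) fa fb.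
  have h2 : phi T <= th j 0 * T.
    have [T0|T0|->] := ltgtP T 0.
    - have ea : th j 0 = alpha.
        apply/eqP; rewrite eq_le fa andbT leNgt; apply/negP => /K1; lra.
      by rewrite ea; apply: pn; apply: ltW.
    - have eb : th j 0 = beta.
        apply/eqP; rewrite eq_le fb /= leNgt; apply/negP => /K2; lra.
      by rewrite eb; apply: pp; apply: ltW.
    - by rewrite p0 mulr0.
  rewrite dotvBl.
  have -> : dotv v (a j *: x j) - dotv u (a j *: x j) =
     (dotv v (a j *: x j) + b j * y j) - T by rewrite /T; ring.
  lra.
have hCF := ler_wpM2l (ltW hC) hF.
have -> : dotv u (v - u) = - C * dotv (v - u) ((Zmat a x)^T *m th).
  by rewrite dotvC /u dotvZr.
lra.
Qed.

Theorem corollary2 (R : realType) (l n : nat) (hl : (0 < l)%N) (hn : (0 < n)%N)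
  (x : 'I_l -> 'cV[R]_n) (y a b : 'I_l -> R)
  (phi : R -> R) (alpha beta : R)
  (phi_ge0 : forall t, 0 <= phi t)
  (phi_ncst : exists t1 t2, phi t1 <> phi t2)
  (phi_cont : continuous phi)
  (phi_subl : sublinear phi)
  (phi_conj : forall s, fconj phi s = iota_itv alpha beta s)
  (hab : alpha < beta)
  (Cs : nat -> R) (K : nat)
  (hC1 : 0 < Cs 1%N)
  (hCinc : forall j : nat, (1 <= j)%N -> (j < K)%N -> Cs j < Cs j.+1)
  (k : nat) (hk1 : (1 <= k)%N) (hkK : (k < K)%N)
  (wk : 'cV[R]_n) (hwk : primal_opt phi a b y x (Cs k) wk)
  (wk1 : 'cV[R]_n) (hwk1 : primal_opt phi a b y x (Cs k.+1) wk1)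
  (thk1 : 'cV[R]_l) (hthk1 : dual_opt alpha beta a b y x (Cs k.+1) thk1)
  (i : 'I_l) :
  (- ((Cs k + Cs k.+1) / (2 * Cs k)) * dotv wk (a i *: x i)
     - (Cs k.+1 - Cs k) / (2 * Cs k) * normv wk * normv (a i *: x i) > b i * y i ->
   thk1 i 0 = alpha /\ in_calR a b y x wk1 i) /\
  (- ((Cs k + Cs k.+1) / (2 * Cs k)) * dotv wk (a i *: x i)
     + (Cs k.+1 - Cs k) / (2 * Cs k) * normv wk * normv (a i *: x i) < b i * y i ->
   thk1 i 0 = beta /\ in_calL a b y x wk1 i).
Proof.
have Cpos : forall j, (1 <= j)%N -> (j <= K)%N -> 0 < Cs j.
  elim => [//|j IH] _ hj.
  have [j0|j0] := posnP j; first by rewrite j0.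
  have := hCinc j j0 hj; have := IH j0 (ltnW hj); lra.
have hC := Cpos k hk1 (ltnW hkK).
have hCC := hCinc k hk1 hkK.
have hC' : 0 < Cs k.+1 by lra.
set C := Cs k in hC hCC hwk *; set C' := Cs k.+1 in hC' hCC hwk1 hthk1 *.
set z := a i *: x i.
set u := - C' *: ((Zmat a x)^T *m thk1).
have hu : u = wk1.
  have h1 := VI_opt _ _ _ _ _ _ _ phi_subl hC' hwk1 u.
  have h2 := VI_dual _ _ _ _ _ _ _ _ _ phi_subl phi_conj hab hC' hthk1 wk1.
  rewrite -/u in h2.
  have : dotv (u - wk1) (u - wk1) <= 0.
    move: h1 h2; rewrite !dotvBl !dotvBr (dotvC wk1 u); lra.
  move=> h; have : dotv (u - wk1) (u - wk1) = 0 by apply/eqP; rewrite eq_le h dotv_ge0.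
  by move/dotv0_eq0/eqP; rewrite subr_eq0 => /eqP.
have [KKT1 KKT2] := dual_KKT _ _ _ _ _ _ _ _ hC' hthk1 i.
rewrite -/u hu -/z in KKT1 KKT2.
have [fa fb] := andP (hthk1.1 i).
have hball : dotv (wk1 - ((C + C') / (2 * C)) *: wk) (wk1 - ((C + C') / (2 * C)) *: wk)
     <= ((C' - C) / (2 * C)) ^+ 2 * dotv wk wk.
  have v1 := VI_opt _ _ _ _ _ _ _ phi_subl hC hwk wk1.
  have v2 := VI_opt _ _ _ _ _ _ _ phi_subl hC' hwk1 wk.
  move: v1 v2; rewrite !dotvBl !dotvBr !dotvZl !dotvZr (dotvC wk1 wk).
  set P := dotv wk wk; set Q := dotv wk wk1; set S := dotv wk1 wk1.
  set F1 := Fs phi a b y x wk1; set F0 := Fs phi a b y x wk.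
  move=> v1 v2.
  have key : C' / C * (Q - P) + (Q - S) >= 0.
    have : 0 <= C' / C * (Q - P + C * (F1 - F0)) + (Q - S + C' * (F0 - F1)).
      by apply: addr_ge0 => //; apply: mulr_ge0 => //; apply: divr_ge0; lra.
    have -> : C' / C * (Q - P + C * (F1 - F0)) = C' / C * (Q - P) + C' * (F1 - F0).
      by field; rewrite gt_eqF.
    lra.
  rewrite -subr_le0.
  have -> : S - (C + C') / (2 * C) * Q -
    ((C + C') / (2 * C) * Q - (C + C') / (2 * C) * ((C + C') / (2 * C) * P)) -
    ((C' - C) / (2 * C)) ^+ 2 * P = - (C' / C * (Q - P) + (Q - S)).
    by field; rewrite gt_eqF.
  lra.
set c := (C + C') / (2 * C) in hball *; set r := (C' - C) / (2 * C) in hball *.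
set dd := wk1 - c *: wk in hball.
have hr : 0 <= r by rewrite /r divr_ge0; lra.
have hnd : normv dd <= r * normv wk.
  have h0 := normv_ge0 dd; have h1 := normv_ge0 wk.
  have : normv dd ^+ 2 <= (r * normv wk) ^+ 2 by rewrite exprMn !normv_sq.
  have hb0 : 0 <= r * normv wk by apply: mulr_ge0.
  move: (r * normv wk) hb0 => B hB0 hsq; nra.
have hzn := normv_ge0 z.
have cs1 := CS dd z.
have cs2 := CS dd (- z); rewrite dotvNr normvN in cs2.
have hdz : dotv wk1 z = dotv dd z + c * dotv wk z by rewrite /dd dotvBl dotvZl; ring.
have hb : normv dd * normv z <= r * normv wk * normv z by apply: ler_wpM2r.
split => H.
- have hR : - dotv wk1 z > b i * y i by rewrite hdz; move: H; rewrite -/c -/r mulNr; lra.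
  split => //.
  apply/eqP; rewrite eq_le fa andbT leNgt; apply/negP => /KKT1; lra.
- have hL : - dotv wk1 z < b i * y i by rewrite hdz; move: H; rewrite -/c -/r mulNr; lra.
  split => //.
  apply/eqP; rewrite eq_le fb /= leNgt; apply/negP => /KKT2; lra.
Qed.
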